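(* Let $b_1,b_2,b_3\in\mathbb{R}$ with $b_1b_2b_3\neq 0$, let $C^b(x)=-\frac{b_3}{2b_1}x_1^2+x_3$ and $H^b(x)=\frac{b_1}{2}\big(x_2^2-\frac{b_2}{b_3}x_3^2\big)$, and for $\alpha,\beta,\gamma,\delta\in\mathbb{R}$ put $$C^b_{\alpha\beta}=\alpha C^b+\beta H^b=-\frac{\alpha b_3}{2b_1}x_1^2+\frac{\beta b_1}{2}x_2^2+\alpha x_3-\frac{\beta b_1b_2}{2b_3}x_3^2,\qquad H^b_{\gamma\delta}=\gamma C^b+\delta H^b,$$ and $$\{f,g\}^b_{\alpha\beta}=\det\begin{pmatrix}-\frac{\alpha b_3}{b_1}x_1 & \beta b_1x_2 & \alpha-\frac{\beta b_1b_2}{b_3}x_3\\[2pt] \frac{\partial f}{\partial x_1}&\frac{\partial f}{\partial x_2}&\frac{\partial f}{\partial x_3}\\[2pt] \frac{\partial g}{\partial x_1}&\frac{\partial g}{\partial x_2}&\frac{\partial g}{\partial x_3}\end{pmatrix},\qquad f,g\in C^\infty(\mathbb{R}^3,\mathbb{R}).$$ Then for every matrix $\begin{pmatrix}\alpha&\beta\\ \gamma&\delta\end{pmatrix}\in SL(2;\mathbb{R})$: (i) $(\mathbb{R}^3,\{\cdot,\cdot\}^b_{\alpha\beta},H^b_{\gamma\delta})$ is a Hamilton-Poisson realization of the system $$\dot x_1=b_1x_2,\qquad \dot x_2=b_2x_1x_3,\qquad \dot x_3=b_3x_1x_2,$$ i.e. $\{\cdot,\cdot\}^b_{\alpha\beta}$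 is a Poisson bracket and $\dot x_i=\{x_i,H^b_{\gamma\delta}\}^b_{\alpha\beta}$ for $i=1,2,3$; thus the system admits a family of Hamilton-Poisson realizations parametrized by $SL(2;\mathbb{R})$; (ii) $C^b_{\alpha\beta}$ is a Casimir of $(\mathbb{R}^3,\{\cdot,\cdot\}^b_{\alpha\beta})$, i.e. $\{C^b_{\alpha\beta},f\}^b_{\alpha\beta}=0$ for all $f\in C^\infty(\mathbb{R}^3,\mathbb{R})$. *)

(* Defs.v *)
From Stdlib Require Import Reals List.
From Coquelicot Require Import Coquelicot.
Open Scope R_scope.

Definition pt : Type := (R * R * R)%type.
Definition x1 (p : pt) : R := fst (fst p).
Definition x2 (p : pt) : R := snd (fst p).
Definition x3 (p : pt) : R := snd p.

Inductive dir : Type := D1 | D2 | D3.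

Definition coord (d : dir) (p : pt) : R :=
  match d with D1 => x1 p | D2 => x2 p | D3 => x3 p end.

Definition upd (p : pt) (d : dir) (t : R) : pt :=
  match d with
  | D1 => (t, x2 p, x3 p)
  | D2 => (x1 p, t, x3 p)
  | D3 => (x1 p, x2 p, t)
  end.

Definition pd (d : dir) (f : pt -> R) : pt -> R :=
  fun p => Derive (fun t => f (upd p d t)) (coord d p).

Definition ipd (l : list dir) (f : pt -> R) : pt -> R := fold_right pd f l.

(* C^infinity(R^3,R): all iterated partial derivatives of all orders exist
   everywhere and are continuous on R^3. *)
Definition smooth (f : pt -> R) : Prop :=
  forall l : list dir,
    (forall p : pt, continuous (ipd l f) p) /\
    (forall (d : dir) (p : pt), ex_derive (fun t => ipd l f (upd p d t)) (coord d p)).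

Definition bracket (b1 b2 b3 al be : R) (f g : pt -> R) : pt -> R :=
  fun p =>
    let a1 := - (al * b3 / b1) * x1 p in
    let a2 := be * b1 * x2 p in
    let a3 := al - (be * b1 * b2 / b3) * x3 p in
    let u1 := pd D1 f p in let u2 := pd D2 f p in let u3 := pd D3 f p in
    let v1 := pd D1 g p in let v2 := pd D2 g p in let v3 := pd D3 g p in
    a1 * (u2 * v3 - u3 * v2) - a2 * (u1 * v3 - u3 * v1) + a3 * (u1 * v2 - u2 * v1).

Definition is_Poisson_bracket (br : (pt -> R) -> (pt -> R) -> (pt -> R)) : Prop :=
  (forall f g, smooth f -> smooth g -> smooth (br f g)) /\
  (forall (a c : R) f g h, smooth f -> smooth g -> smooth h ->
     forall p, br (fun q => a * f q + c * g q) h p = a * br f h p + c * br g h p) /\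
  (forall (a c : R) f g h, smooth f -> smooth g -> smooth h ->
     forall p, br h (fun q => a * f q + c * g q) p = a * br h f p + c * br h g p) /\
  (forall f g, smooth f -> smooth g -> forall p, br f g p = - br g f p) /\
  (forall f g h, smooth f -> smooth g -> smooth h ->
     forall p, br f (fun q => g q * h q) p = br f g p * h p + g p * br f h p) /\
  (forall f g h, smooth f -> smooth g -> smooth h ->
     forall p, br f (br g h) p + br g (br h f) p + br h (br f g) p = 0).

Definition Cb (b1 b2 b3 : R) (p : pt) : R := - (b3 / (2 * b1)) * (x1 p) ^ 2 + x3 p.
Definition Hb (b1 b2 b3 : R) (p : pt) : R :=
  (b1 / 2) * ((x2 p) ^ 2 - (b2 / b3) * (x3 p) ^ 2).

Definition comb (b1 b2 b3 al be : R) (p : pt) : R :=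
  al * Cb b1 b2 b3 p + be * Hb b1 b2 b3 p.

Definition field (b1 b2 b3 : R) (d : dir) (p : pt) : R :=
  match d with
  | D1 => b1 * x2 p
  | D2 => b2 * x1 p * x3 p
  | D3 => b3 * x1 p * x2 p
  end.

Definition HP_realization (br : (pt -> R) -> (pt -> R) -> (pt -> R))
  (H : pt -> R) (X : dir -> pt -> R) : Prop :=
  is_Poisson_bracket br /\ smooth H /\
  forall (d : dir) (p : pt), X d p = br (coord d) H p.

Definition is_Casimir (br : (pt -> R) -> (pt -> R) -> (pt -> R)) (C : pt -> R) : Prop :=
  smooth C /\ forall f, smooth f -> forall p, br C f p = 0.

(* Main.v *)
Require Import Defs.
From Stdlib Require Import Reals List FunctionalExtensionality Lia.
From Coquelicot Require Import Coquelicot.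
Open Scope R_scope.

Lemma upd_id p d : upd p d (coord d p) = p.
Proof. destruct p as [[a b] c]; destruct d; reflexivity. Qed.

Definition ex_pd d (f : pt -> R) p := ex_derive (fun t => f (upd p d t)) (coord d p).
Definition okf (F : pt -> R) := (forall p, continuous F p) /\ (forall d p, ex_pd d F p).

Lemma smooth_okf f : smooth f <-> forall l, okf (ipd l f).
Proof. reflexivity. Qed.

Lemma pd_plus d f g p : ex_pd d f p -> ex_pd d g p ->
  pd d (fun q => f q + g q) p = pd d f p + pd d g p.
Proof. intros; unfold pd; apply (Derive_plus (fun t => f (upd p d t)) (fun t => g (upd p d t))); auto. Qed.

Lemma pd_mult d f g p : ex_pd d f p -> ex_pd d g p ->
  pd d (fun q => f q * g q) p = pd d f p * g p + f p * pd d g p.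
Proof. intros; unfold pd. rewrite (Derive_mult (fun t => f (upd p d t)) (fun t => g (upd p d t))); auto.
  rewrite upd_id; reflexivity. Qed.

Lemma pd_scal d a f p : pd d (fun q => a * f q) p = a * pd d f p.
Proof. unfold pd. apply Derive_scal. Qed.

Lemma pd_const d c : pd d (fun _ => c) = fun _ => 0.
Proof. apply functional_extensionality; intro p; unfold pd; apply Derive_const. Qed.

Lemma okf_plus F G : okf F -> okf G -> okf (fun q => F q + G q).
Proof. intros [H1 H2] [H3 H4]; split.
  - intro p; apply (continuous_plus F G); [apply H1|apply H3].
  - intros d p; apply (ex_derive_plus (fun t => F (upd p d t)) (fun t => G (upd p d t))); [apply H2|apply H4]. Qed.

Lemma okf_mult F G : okf F -> okf G -> okf (fun q => F q * G q).
Proof. intros [H1 H2] [H3 H4]; split.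
  - intro p; apply (continuous_mult F G); [apply H1|apply H3].
  - intros d p; apply (ex_derive_mult (fun t => F (upd p d t)) (fun t => G (upd p d t))); [apply H2|apply H4]. Qed.

Lemma okf_const c : okf (fun _ => c).
Proof. split; intros. apply continuous_const. unfold ex_pd; simpl. apply (ex_derive_const c). Qed.

Lemma ipd_app l1 l2 f : ipd (l1 ++ l2) f = ipd l1 (ipd l2 f).
Proof. unfold ipd; apply fold_right_app. Qed.

Lemma ipd_plus_gen l : forall f g,
  (forall k, (length k < length l)%nat -> okf (ipd k f) /\ okf (ipd k g)) ->
  ipd l (fun q => f q + g q) = fun q => ipd l f q + ipd l g q.
Proof.
  induction l as [|d l IH]; intros f g H; [reflexivity|].
  simpl. rewrite IH. 2:{ intros k Hk; apply H; simpl; lia. }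
  apply functional_extensionality; intro p. apply pd_plus.
  apply (proj2 (proj1 (H l ltac:(simpl; lia)))).
  apply (proj2 (proj2 (H l ltac:(simpl; lia)))).
Qed.

Lemma ipd_scal l a f : ipd l (fun q => a * f q) = fun q => a * ipd l f q.
Proof. induction l as [|d l IH]; [reflexivity|]. simpl; rewrite IH.
  apply functional_extensionality; intro p; apply pd_scal. Qed.

Lemma ipd_const l c : exists c', ipd l (fun _ => c) = fun _ => c'.
Proof. induction l as [|d l [c' IH]]. exists c; reflexivity. exists 0; simpl; rewrite IH; apply pd_const. Qed.

Lemma smooth_const c : smooth (fun _ => c).
Proof. intro l. destruct (ipd_const l c) as [c' E]. change (okf (ipd l (fun _ => c))). rewrite E; apply okf_const. Qed.

Lemma smooth_plus f g : smooth f -> smooth g -> smooth (fun q => f q + g q).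
Proof. intros Hf Hg l. change (okf (ipd l (fun q => f q + g q))).
  rewrite ipd_plus_gen. apply okf_plus; [apply Hf|apply Hg]. intros; split; [apply Hf|apply Hg]. Qed.

Lemma smooth_scal a f : smooth f -> smooth (fun q => a * f q).
Proof. intros Hf l. change (okf (ipd l (fun q => a * f q))). rewrite ipd_scal.
  apply okf_mult; [apply okf_const|apply Hf]. Qed.

Lemma smooth_pd d f : smooth f -> smooth (pd d f).
Proof. intros Hf l. change (okf (ipd l (pd d f))). change (pd d f) with (ipd (d :: nil) f).
  rewrite <- ipd_app. apply Hf. Qed.

Lemma smooth_mult_aux n : forall l, (length l <= n)%nat -> forall f g, smooth f -> smooth g ->
  okf (ipd l (fun q => f q * g q)).
Proof.
  induction n as [|n IH]; intros l Hl f g Hf Hg.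
  - destruct l; [|simpl in Hl; lia]. apply okf_mult; [apply (Hf nil)|apply (Hg nil)].
  - destruct (Nat.le_gt_cases (length l) n) as [Hle|Hgt]; [now apply IH|].
    destruct l as [|d0 l0]; [simpl in Hgt; lia|].
    destruct (exists_last (l := d0 :: l0) ltac:(discriminate)) as [l' [d E]].
    rewrite E in Hl, Hgt |- *. rewrite length_app in Hl, Hgt; simpl in Hl, Hgt.
    rewrite ipd_app. simpl ipd at 2.
    assert (Ep : pd d (fun q => f q * g q) = fun q => pd d f q * g q + f q * pd d g q).
    { apply functional_extensionality; intro p; apply pd_mult; [apply (Hf nil)|apply (Hg nil)]. }
    rewrite Ep, ipd_plus_gen.
    + apply okf_plus; apply IH; try lia; auto using smooth_pd.
    + intros k Hk; split; apply IH; try lia; auto using smooth_pd.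
Qed.

Lemma smooth_mult f g : smooth f -> smooth g -> smooth (fun q => f q * g q).
Proof. intros Hf Hg l. apply (smooth_mult_aux (length l)); auto. Qed.

Lemma smooth_opp f : smooth f -> smooth (fun q => - f q).
Proof. intros H. assert (E : (fun q => - f q) = fun q => (-1) * f q).
  { apply functional_extensionality; intro; ring. } rewrite E; apply smooth_scal, H. Qed.

Lemma smooth_minus f g : smooth f -> smooth g -> smooth (fun q => f q - g q).
Proof. intros. apply (smooth_plus f (fun q => - g q)); auto using smooth_opp. Qed.

Lemma pd_coord d i : exists c, pd d (coord i) = fun _ => c.
Proof.
  destruct (Req_dec 0 0) as [_|]; [|tauto].
  destruct d, i;
  first [ exists 1; apply functional_extensionality; intros [[a b] c]; unfold pd; cbv [x1 x2 x3 coord upd fst snd]; exact (Derive_id _)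
        | exists 0; apply functional_extensionality; intros [[a b] c]; unfold pd; cbv [x1 x2 x3 coord upd fst snd]; exact (Derive_const _ _) ].
Qed.

Lemma smooth_coord i : smooth (coord i).
Proof.
  intro l. change (okf (ipd l (coord i))). destruct l as [|d0 l0].
  - split.
    + intro p. destruct p as [[a b] c]. apply filterlim_locally; intro eps; exists eps;
      intros [[u v] w] [[H1 H2] H3]; destruct i; assumption.
    + intros d p. unfold ex_pd. destruct p as [[a b] c]; destruct d, i; cbv [x1 x2 x3 coord upd fst snd];
      first [exact (ex_derive_id _) | exact (ex_derive_const _ _)].
  - destruct (exists_last (l := d0 :: l0) ltac:(discriminate)) as [l' [d E]].
    rewrite E, ipd_app. simpl ipd at 2. destruct (pd_coord d i) as [c Ec]. rewrite Ec.
    destruct (ipd_const l' c) as [c' E']. rewrite E'. apply okf_const.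
Qed.

Lemma cont2d_12 (F : pt -> R) a b c :
  continuous F ((a,b),c) -> continuity_2d_pt (fun u v => F ((u,v),c)) a b.
Proof.
  intros H eps. apply filterlim_locally with (eps := eps) in H.
  destruct H as [d Hd]. exists d. intros u v Hu Hv.
  apply (Hd ((u,v),c)). split; [split|]; simpl.
  - exact Hu.
  - exact Hv.
  - unfold ball; simpl. unfold AbsRing_ball, abs, minus, plus, opp; simpl. rewrite Rplus_opp_r, Rabs_R0. apply cond_pos.
Qed.

Lemma cont2d_13 (F : pt -> R) a b c :
  continuous F ((a,b),c) -> continuity_2d_pt (fun u v => F ((u,b),v)) a c.
Proof.
  intros H eps. apply filterlim_locally with (eps := eps) in H.
  destruct H as [d Hd]. exists d. intros u v Hu Hv.
  apply (Hd ((u,b),v)). split; [split|]; simpl.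
  - exact Hu.
  - unfold ball; simpl. unfold AbsRing_ball, abs, minus, plus, opp; simpl. rewrite Rplus_opp_r, Rabs_R0. apply cond_pos.
  - exact Hv.
Qed.

Lemma cont2d_23 (F : pt -> R) a b c :
  continuous F ((a,b),c) -> continuity_2d_pt (fun u v => F ((a,u),v)) b c.
Proof.
  intros H eps. apply filterlim_locally with (eps := eps) in H.
  destruct H as [d Hd]. exists d. intros u v Hu Hv.
  apply (Hd ((a,u),v)). split; [split|]; simpl.
  - unfold ball; simpl. unfold AbsRing_ball, abs, minus, plus, opp; simpl. rewrite Rplus_opp_r, Rabs_R0. apply cond_pos.
  - exact Hu.
  - exact Hv.
Qed.

Ltac red3 := cbv [x1 x2 x3 coord upd fst snd ex_pd okf ipd fold_right pd] in *.

Lemma sym12 G : smooth G -> forall p, pd D1 (pd D2 G) p = pd D2 (pd D1 G) p.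
Proof.
  intros HG [[a b] c]. unfold pd; cbv [x1 x2 x3 coord upd fst snd].
  apply (Schwarz (fun u v => G ((u,v),c))).
  - exists (mkposreal 1 Rlt_0_1). intros u v _ _.
    pose proof (proj2 (HG nil)) as H0. pose proof (proj2 (HG (D1::nil))) as H1.
    pose proof (proj2 (HG (D2::nil))) as H2. red3.
    repeat split; [apply (H0 D1 ((u,v),c)) | apply (H0 D2 ((u,v),c)) | apply (H2 D1 ((u,v),c)) | apply (H1 D2 ((u,v),c))].
  - pose proof (proj1 (HG (D1::D2::nil)) ((a,b),c)) as H. red3.
    apply (cont2d_12 (fun q => _) a b c H).
  - pose proof (proj1 (HG (D2::D1::nil)) ((a,b),c)) as H. red3.
    apply (cont2d_12 (fun q => _) a b c H).
Qed.

Lemma sym13 G : smooth G -> forall p, pd D1 (pd D3 G) p = pd D3 (pd D1 G) p.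
Proof.
  intros HG [[a b] c]. unfold pd; cbv [x1 x2 x3 coord upd fst snd].
  apply (Schwarz (fun u v => G ((u,b),v))).
  - exists (mkposreal 1 Rlt_0_1). intros u v _ _.
    pose proof (proj2 (HG nil)) as H0. pose proof (proj2 (HG (D1::nil))) as H1.
    pose proof (proj2 (HG (D3::nil))) as H2. red3.
    repeat split; [apply (H0 D1 ((u,b),v)) | apply (H0 D3 ((u,b),v)) | apply (H2 D1 ((u,b),v)) | apply (H1 D3 ((u,b),v))].
  - pose proof (proj1 (HG (D1::D3::nil)) ((a,b),c)) as H. red3.
    apply (cont2d_13 (fun q => _) a b c H).
  - pose proof (proj1 (HG (D3::D1::nil)) ((a,b),c)) as H. red3.
    apply (cont2d_13 (fun q => _) a b c H).
Qed.

Lemma sym23 G : smooth G -> forall p, pd D2 (pd D3 G) p = pd D3 (pd D2 G) p.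
Proof.
  intros HG [[a b] c]. unfold pd; cbv [x1 x2 x3 coord upd fst snd].
  apply (Schwarz (fun u v => G ((a,u),v))).
  - exists (mkposreal 1 Rlt_0_1). intros u v _ _.
    pose proof (proj2 (HG nil)) as H0. pose proof (proj2 (HG (D2::nil))) as H1.
    pose proof (proj2 (HG (D3::nil))) as H2. red3.
    repeat split; [apply (H0 D2 ((a,u),v)) | apply (H0 D3 ((a,u),v)) | apply (H2 D2 ((a,u),v)) | apply (H1 D3 ((a,u),v))].
  - pose proof (proj1 (HG (D2::D3::nil)) ((a,b),c)) as H. red3.
    apply (cont2d_23 (fun q => _) a b c H).
  - pose proof (proj1 (HG (D3::D2::nil)) ((a,b),c)) as H. red3.
    apply (cont2d_23 (fun q => _) a b c H).
Qed.

Lemma brk_is_derive b1 b2 b3 al be (X1 X2 X3 G1 G2 G3 H1 H2 H3 : R -> R) t0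
  dX1 dX2 dX3 dG1 dG2 dG3 dH1 dH2 dH3 :
  is_derive X1 t0 dX1 -> is_derive X2 t0 dX2 -> is_derive X3 t0 dX3 ->
  is_derive G1 t0 dG1 -> is_derive G2 t0 dG2 -> is_derive G3 t0 dG3 ->
  is_derive H1 t0 dH1 -> is_derive H2 t0 dH2 -> is_derive H3 t0 dH3 ->
  is_derive (fun t =>
    let a1 := - (al * b3 / b1) * X1 t in
    let a2 := be * b1 * X2 t in
    let a3 := al - (be * b1 * b2 / b3) * X3 t in
    let u1 := G1 t in let u2 := G2 t in let u3 := G3 t in
    let v1 := H1 t in let v2 := H2 t in let v3 := H3 t in
    a1 * (u2 * v3 - u3 * v2) - a2 * (u1 * v3 - u3 * v1) + a3 * (u1 * v2 - u2 * v1)) t0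
   (let a1 := - (al * b3 / b1) * X1 t0 in
    let a2 := be * b1 * X2 t0 in
    let a3 := al - (be * b1 * b2 / b3) * X3 t0 in
    let u1 := G1 t0 in let u2 := G2 t0 in let u3 := G3 t0 in
    let v1 := H1 t0 in let v2 := H2 t0 in let v3 := H3 t0 in
    - (al * b3 / b1) * dX1 * (u2 * v3 - u3 * v2) + a1 * (dG2 * v3 + u2 * dH3 - dG3 * v2 - u3 * dH2)
    - (be * b1 * dX2 * (u1 * v3 - u3 * v1) + a2 * (dG1 * v3 + u1 * dH3 - dG3 * v1 - u3 * dH1))
    + (- (be * b1 * b2 / b3) * dX3 * (u1 * v2 - u2 * v1) + a3 * (dG1 * v2 + u1 * dH2 - dG2 * v1 - u2 * dH1))).
Proof.
  intros HX1 HX2 HX3 HG1 HG2 HG3 HH1 HH2 HH3. cbv zeta.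
  auto_derive.
  - repeat split; eexists; eassumption.
  - assert (E1 : Derive (fun x => X1 x) t0 = dX1) by exact (is_derive_unique _ _ _ HX1).
    assert (E2 : Derive (fun x => X2 x) t0 = dX2) by exact (is_derive_unique _ _ _ HX2).
    assert (E3 : Derive (fun x => X3 x) t0 = dX3) by exact (is_derive_unique _ _ _ HX3).
    assert (E4 : Derive (fun x => G1 x) t0 = dG1) by exact (is_derive_unique _ _ _ HG1).
    assert (E5 : Derive (fun x => G2 x) t0 = dG2) by exact (is_derive_unique _ _ _ HG2).
    assert (E6 : Derive (fun x => G3 x) t0 = dG3) by exact (is_derive_unique _ _ _ HG3).
    assert (E7 : Derive (fun x => H1 x) t0 = dH1) by exact (is_derive_unique _ _ _ HH1).
    assert (E8 : Derive (fun x => H2 x) t0 = dH2) by exact (is_derive_unique _ _ _ HH2).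
    assert (E9 : Derive (fun x => H3 x) t0 = dH3) by exact (is_derive_unique _ _ _ HH3).
    rewrite E1, E2, E3, E4, E5, E6, E7, E8, E9. ring.
Qed.

Lemma slice_pd e g p : smooth g -> is_derive (fun t => g (upd p e t)) (coord e p) (pd e g p).
Proof. intro Hg. apply Derive_correct. apply (proj2 (Hg nil) e p). Qed.

Lemma pd_bracket b1 b2 b3 al be g h e p : smooth g -> smooth h ->
  pd e (bracket b1 b2 b3 al be g h) p =
  - (al * b3 / b1) * pd e (coord D1) p * (pd D2 g p * pd D3 h p - pd D3 g p * pd D2 h p)
  + - (al * b3 / b1) * x1 p * (pd e (pd D2 g) p * pd D3 h p + pd D2 g p * pd e (pd D3 h) p - pd e (pd D3 g) p * pd D2 h p - pd D3 g p * pd e (pd D2 h) p)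
  - (be * b1 * pd e (coord D2) p * (pd D1 g p * pd D3 h p - pd D3 g p * pd D1 h p) + be * b1 * x2 p * (pd e (pd D1 g) p * pd D3 h p + pd D1 g p * pd e (pd D3 h) p - pd e (pd D3 g) p * pd D1 h p - pd D3 g p * pd e (pd D1 h) p))
  + (- (be * b1 * b2 / b3) * pd e (coord D3) p * (pd D1 g p * pd D2 h p - pd D2 g p * pd D1 h p) + (al - (be * b1 * b2 / b3) * x3 p) * (pd e (pd D1 g) p * pd D2 h p + pd D1 g p * pd e (pd D2 h) p - pd e (pd D2 g) p * pd D1 h p - pd D2 g p * pd e (pd D1 h) p)).
Proof.
  intros Hg Hh.
  pose proof (brk_is_derive b1 b2 b3 al be
    (fun t => coord D1 (upd p e t)) (fun t => coord D2 (upd p e t)) (fun t => coord D3 (upd p e t))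
    (fun t => pd D1 g (upd p e t)) (fun t => pd D2 g (upd p e t)) (fun t => pd D3 g (upd p e t))
    (fun t => pd D1 h (upd p e t)) (fun t => pd D2 h (upd p e t)) (fun t => pd D3 h (upd p e t))
    (coord e p) _ _ _ _ _ _ _ _ _
    (slice_pd e _ p (smooth_coord D1)) (slice_pd e _ p (smooth_coord D2)) (slice_pd e _ p (smooth_coord D3))
    (slice_pd e _ p (smooth_pd D1 g Hg)) (slice_pd e _ p (smooth_pd D2 g Hg)) (slice_pd e _ p (smooth_pd D3 g Hg))
    (slice_pd e _ p (smooth_pd D1 h Hh)) (slice_pd e _ p (smooth_pd D2 h Hh)) (slice_pd e _ p (smooth_pd D3 h Hh))) as H.
  cbv beta zeta in H. rewrite upd_id in H.
  exact (is_derive_unique _ _ _ H).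
Qed.

Ltac pcsolve := intros [[a b] c]; unfold pd; cbv [x1 x2 x3 coord upd fst snd];
  first [exact (Derive_id _) | exact (Derive_const _ _)].
Lemma pc11 p : pd D1 (coord D1) p = 1. Proof. revert p; pcsolve. Qed.
Lemma pc12 p : pd D1 (coord D2) p = 0. Proof. revert p; pcsolve. Qed.
Lemma pc13 p : pd D1 (coord D3) p = 0. Proof. revert p; pcsolve. Qed.
Lemma pc21 p : pd D2 (coord D1) p = 0. Proof. revert p; pcsolve. Qed.
Lemma pc22 p : pd D2 (coord D2) p = 1. Proof. revert p; pcsolve. Qed.
Lemma pc23 p : pd D2 (coord D3) p = 0. Proof. revert p; pcsolve. Qed.
Lemma pc31 p : pd D3 (coord D1) p = 0. Proof. revert p; pcsolve. Qed.
Lemma pc32 p : pd D3 (coord D2) p = 0. Proof. revert p; pcsolve. Qed.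
Lemma pc33 p : pd D3 (coord D3) p = 1. Proof. revert p; pcsolve. Qed.

Lemma brk_val b1 b2 b3 al be f g p : bracket b1 b2 b3 al be f g p =
  (- (al * b3 / b1) * x1 p) * (pd D2 f p * pd D3 g p - pd D3 f p * pd D2 g p)
  - (be * b1 * x2 p) * (pd D1 f p * pd D3 g p - pd D3 f p * pd D1 g p)
  + (al - (be * b1 * b2 / b3) * x3 p) * (pd D1 f p * pd D2 g p - pd D2 f p * pd D1 g p).
Proof. reflexivity. Qed.

Lemma jacobi b1 b2 b3 al be f g h : smooth f -> smooth g -> smooth h -> forall p,
  bracket b1 b2 b3 al be f (bracket b1 b2 b3 al be g h) p
  + bracket b1 b2 b3 al be g (bracket b1 b2 b3 al be h f) p
  + bracket b1 b2 b3 al be h (bracket b1 b2 b3 al be f g) p = 0.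
Proof.
  intros Hf Hg Hh p.
  rewrite (brk_val _ _ _ _ _ f), (brk_val _ _ _ _ _ g), (brk_val _ _ _ _ _ h).
  rewrite !pd_bracket by assumption.
  rewrite !pc11, !pc12, !pc13, !pc21, !pc22, !pc23, !pc31, !pc32, !pc33.
  rewrite !(sym12 f Hf p), !(sym13 f Hf p), !(sym23 f Hf p).
  rewrite !(sym12 g Hg p), !(sym13 g Hg p), !(sym23 g Hg p).
  rewrite !(sym12 h Hh p), !(sym13 h Hh p), !(sym23 h Hh p).
  ring.
Qed.

Lemma pd_lin d a c f g p : smooth f -> smooth g ->
  pd d (fun q => a * f q + c * g q) p = a * pd d f p + c * pd d g p.
Proof. intros Hf Hg. rewrite pd_plus. rewrite !pd_scal. reflexivity.
  apply (proj2 (smooth_scal a f Hf nil)). apply (proj2 (smooth_scal c g Hg nil)). Qed.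

Lemma smooth_sq f : smooth f -> smooth (fun q => f q ^ 2).
Proof. intro H. assert (E : (fun q => f q ^ 2) = fun q => f q * f q).
  { apply functional_extensionality; intro; ring. } rewrite E; apply smooth_mult; auto. Qed.

Ltac smooth_tac := repeat match goal with
  | |- smooth (fun _ => ?c) => apply (smooth_const c)
  | |- smooth (fun q => ?A + ?B) => apply (smooth_plus (fun q => A) (fun q => B))
  | |- smooth (fun q => ?A - ?B) => apply (smooth_minus (fun q => A) (fun q => B))
  | |- smooth (fun q => ?A * ?B) => apply (smooth_mult (fun q => A) (fun q => B))
  | |- smooth (fun q => - ?A) => apply (smooth_opp (fun q => A))
  | |- smooth (fun q => ?A ^ 2) => apply (smooth_sq (fun q => A))
  | |- smooth (fun q => pd ?d ?f q) => apply (smooth_pd d f)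
  | |- smooth (fun q => x1 q) => apply (smooth_coord D1)
  | |- smooth (fun q => x2 q) => apply (smooth_coord D2)
  | |- smooth (fun q => x3 q) => apply (smooth_coord D3)
  | |- smooth x1 => apply (smooth_coord D1)
  | |- smooth x2 => apply (smooth_coord D2)
  | |- smooth x3 => apply (smooth_coord D3)
  | |- smooth (fun q => ?f q) => assumption
  | |- smooth ?f => assumption
  end.

Lemma smooth_bracket b1 b2 b3 al be f g : smooth f -> smooth g -> smooth (bracket b1 b2 b3 al be f g).
Proof. intros Hf Hg. unfold bracket; cbv zeta. smooth_tac. Qed.

Lemma smooth_comb b1 b2 b3 a c : smooth (comb b1 b2 b3 a c).
Proof. unfold comb, Cb, Hb. smooth_tac. Qed.

Section PC.
Variables (b1 b2 b3 a c : R) (h1 : b1 <> 0) (h3 : b3 <> 0).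
Lemma pdc1 p : pd D1 (comb b1 b2 b3 a c) p = - (a * b3 / b1) * x1 p.
Proof. destruct p as [[u v] w]; unfold pd, comb, Cb, Hb; cbv [x1 x2 x3 coord upd fst snd].
  apply is_derive_unique; auto_derive; [trivial | field; auto]. Qed.
Lemma pdc2 p : pd D2 (comb b1 b2 b3 a c) p = c * b1 * x2 p.
Proof. destruct p as [[u v] w]; unfold pd, comb, Cb, Hb; cbv [x1 x2 x3 coord upd fst snd].
  apply is_derive_unique; auto_derive; [trivial | field; auto]. Qed.
Lemma pdc3 p : pd D3 (comb b1 b2 b3 a c) p = a - (c * b1 * b2 / b3) * x3 p.
Proof. destruct p as [[u v] w]; unfold pd, comb, Cb, Hb; cbv [x1 x2 x3 coord upd fst snd].
  apply is_derive_unique; auto_derive; [trivial | field; auto]. Qed.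
End PC.

Theorem proposition3p2 (b1 b2 b3 : R) (hb : b1 * b2 * b3 <> 0)
  (al be ga de : R) (hSL : al * de - be * ga = 1) :
  HP_realization (bracket b1 b2 b3 al be) (comb b1 b2 b3 ga de) (field b1 b2 b3) /\
  is_Casimir (bracket b1 b2 b3 al be) (comb b1 b2 b3 al be).
Proof.
  assert (h1 : b1 <> 0) by (intro E; apply hb; rewrite E; ring).
  assert (h3 : b3 <> 0) by (intro E; apply hb; rewrite E; ring).
  split; [split; [|split]|split].
  - split; [|split; [|split; [|split; [|split]]]].
    + intros; apply smooth_bracket; auto.
    + intros a c f g h Hf Hg Hh p. rewrite !brk_val, !pd_lin by assumption. ring.
    + intros a c f g h Hf Hg Hh p. rewrite !brk_val, !pd_lin by assumption. ring.
    + intros f g Hf Hg p. rewrite !brk_val. ring.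
    + intros f g h Hf Hg Hh p. rewrite !brk_val.
      rewrite !pd_mult by first [apply (proj2 (Hg nil)) | apply (proj2 (Hh nil))]. ring.
    + intros f g h Hf Hg Hh p. apply jacobi; auto.
  - apply smooth_comb.
  - intros d p. match goal with |- ?L = _ => transitivity (L * (al*de-be*ga)); [rewrite hSL; ring|] end.
    rewrite brk_val, !pdc1, !pdc2, !pdc3 by assumption.
    destruct d; rewrite ?pc11, ?pc12, ?pc13, ?pc21, ?pc22, ?pc23, ?pc31, ?pc32, ?pc33;
      unfold field; simpl coord; field; auto.
  - apply smooth_comb.
  - intros f Hf p. rewrite brk_val, !pdc1, !pdc2, !pdc3 by assumption. ring.
Qed.
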